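(* For every integer $l\ge1$, let $m=5l+3$, $L_1=[2l+1]$, $L_2=\{2l+2,\dots,4l+2\}$, $L_3=\{4l+3,\dots,5l+3\}$, and let $O_{L_s}$, $E_{L_s}$ denote the sets of odd and even elements of $L_s$. Let $\mathcal{I}_7(l)$ be the instance on $[m]$ with $A_i=E_{L_1}\cup(L_2\setminus\{i+2l+1\})\cup L_3$ for $i\in O_{L_1}$; $A_i=O_{L_2}\cup(L_1\setminus\{i\})\cup L_3$ for $i\in E_{L_1}$; $A_i=O_{L_2}\cup(L_1\setminus\{i-(2l+1)\})\cup L_3$ for $i\in E_{L_2}$; $A_i=E_{L_1}\cup(L_2\setminus\{i\})\cup L_3$ for $i\in O_{L_2}$; $A_i=\{2(i-4l-2)-1,\ 2(i-3l-2)\}$ for $i\in L_3$. Then the UMCD coding scheme is optimal for $\mathcal{I}_7(l)$, i.e. $\beta(\mathcal{I}_7(l))=\beta_{\text{UMCD}}(\mathcal{I}_7(l))$.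
   Context: Index coding: messages $x_i\in\mathbb{F}_q^t$; receiver $i$ wants $x_i$ and knows $x_j$, $j\in A_i\subseteq[m]\setminus\{i\}$. A $(t,r)$ index code is an encoder $\phi:\mathbb{F}_q^{mt}\to\mathbb{F}_q^r$ with decoders $\psi_i$ satisfying $\psi_i(\phi(x),(x_j)_{j\in A_i})=x_i$ for all messages and $i$; $\beta(\mathcal{I})$ is the infimum of $r/t$ over all $t$ and codes (over finite fields). $B_i=[m]\setminus(A_i\cup\{i\})$. For a $0/1$ matrix $\boldsymbol{G}$, $\boldsymbol{G}_{[k]}^L$ is the submatrix of the first $k$ rows and columns $L$; $\mathrm{mcm}$ is the maximum number of $1$-entries in distinct rows and columns (0 if no columns). UMCD algorithm: $N=[m]$, $k=0$; while $N\ne\emptyset$: $k\leftarrow k+1$; pick $w\in N$ minimizing $|A_w|$ over $N$ (arbitrary tie-breaking); row $k$ of $\boldsymbol{G}$ is the indicator of $\{w\}\cup A_w$; remove $w$ from $N$; remove every $i\in N$ with $\mathrm{mcm}(\boldsymbol{G}_{[k]}^{\{i\}\cup B_i})=\mathrm{mcm}(\boldsymbol{G}_{[k]}^{B_i})+1$; output $\beta_{\text{UMCD}}=k$. *)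

(* Defs.v *)
From mathcomp Require Import all_boot all_order all_algebra.
From mathcomp Require Import all_classical all_reals.
From mathcomp Require Import Rstruct.
Set Implicit Arguments. Unset Strict Implicit. Unset Printing Implicit Defensive.
Import Order.TTheory GRing.Theory Num.Theory.

(* An index coding instance on [m] is given by the side-information sets
   A : 'I_m -> {set 'I_m}; receiver i (0-indexed) wants x_i, knows x_j, j in A i. *)

(* The side information available to receiver i: the components in A_i
   (other components are masked to 0, so decoders cannot depend on them). *)
Definition mask (F : finFieldType) (m t : nat) (S : {set 'I_m})
    (x : {ffun 'I_m -> 'rV[F]_t}) : {ffun 'I_m -> 'rV[F]_t} :=
  [ffun j => if j \in S then x j else 0%R].

Definition has_code (F : finFieldType) (t r m : nat) (A : 'I_m -> {set 'I_m}) : Prop :=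
  exists phi : {ffun 'I_m -> 'rV[F]_t} -> 'rV[F]_r,
  exists psi : 'I_m -> 'rV[F]_r -> {ffun 'I_m -> 'rV[F]_t} -> 'rV[F]_t,
    forall (x : {ffun 'I_m -> 'rV[F]_t}) (i : 'I_m),
      psi i (phi x) (mask (A i) x) = x i.

Definition beta (m : nat) (A : 'I_m -> {set 'I_m}) : Rdefinitions.R :=
  inf [set x : Rdefinitions.R | exists (F : finFieldType) (t r : nat),
         (0 < t)%N /\ has_code F t r A /\ x = (r%:R / t%:R)%R].

Definition Bset (m : nat) (A : 'I_m -> {set 'I_m}) (i : 'I_m) : {set 'I_m} :=
  ~: (i |: A i).

(* A 0/1 matrix G with k rows and columns [m] is represented by the seq of its
   rows, each row being the set of columns holding a 1.
   matchable rows L n : there are n 1-entries of the submatrix with columns L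
   in pairwise distinct rows and columns. *)
Definition matchable (m : nat) (rows : seq {set 'I_m}) (L : {set 'I_m}) (n : nat) : bool :=
  [exists f : {ffun 'I_n -> 'I_(size rows)}, exists g : {ffun 'I_n -> 'I_m},
     [&& injectiveb f, injectiveb g &
         [forall a : 'I_n, (g a \in L) && (g a \in nth (finset.set0 : {set 'I_m}) rows (f a))]]].

Definition mcm (m : nat) (rows : seq {set 'I_m}) (L : {set 'I_m}) : nat :=
  \max_(n < m.+1 | matchable rows L n) n.

Definition umcd_next (m : nat) (A : 'I_m -> {set 'I_m}) (N : {set 'I_m})
    (rows : seq {set 'I_m}) (w : 'I_m) : {set 'I_m} :=
  let rows' := rcons rows (w |: A w) in
  [set i in N :\ w | mcm rows' (i |: Bset A i) != (mcm rows' (Bset A i)).+1].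

(* ws is a valid complete execution of UMCD (with some tie-breaking) from the
   state (N, rows): each chosen w lies in N and minimises |A_w| over N,
   and the loop stops exactly when N is empty. *)
Fixpoint umcd_run (m : nat) (A : 'I_m -> {set 'I_m}) (N : {set 'I_m})
    (rows : seq {set 'I_m}) (ws : seq 'I_m) : bool :=
  match ws with
  | [::] => N == finset.set0
  | w :: ws' =>
      [&& w \in N, [forall v in N, #|A w| <= #|A v|] &
          umcd_run A (umcd_next A N rows w) (rcons rows (w |: A w)) ws']
  end.

Definition umcd_output (m : nat) (A : 'I_m -> {set 'I_m}) (k : nat) : Prop :=
  exists ws : seq 'I_m, umcd_run A [set: 'I_m]%SET [::] ws /\ size ws = k.

(* The instance I_7(l), 1-indexed on {1,...,5l+3}. *)
Definition inL1 (l j : nat) : bool := (1 <= j) && (j <= 2 * l+1).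
Definition inL2 (l j : nat) : bool := (2 * l+2 <= j) && (j <= 4 * l+2).
Definition inL3 (l j : nat) : bool := (4 * l+3 <= j) && (j <= 5 * l+3).

Definition A7nat (l i j : nat) : bool :=
  if inL1 l i && odd i then
    [|| inL1 l j && ~~ odd j, inL2 l j && (j != i + (2 * l+1)) | inL3 l j]
  else if inL1 l i && ~~ odd i then
    [|| inL2 l j && odd j, inL1 l j && (j != i) | inL3 l j]
  else if inL2 l i && ~~ odd i then
    [|| inL2 l j && odd j, inL1 l j && (j != i - (2 * l+1)) | inL3 l j]
  else if inL2 l i && odd i then
    [|| inL1 l j && ~~ odd j, inL2 l j && (j != i) | inL3 l j]
  else if inL3 l i then
    (j == 2 * (i-4 * l-2) - 1) || (j == 2 * (i-3 * l-2))
  else false.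

(* Element k : 'I_(5l+3) represents the paper's index k+1. *)
Definition I7 (l : nat) : 'I_(5 * l+3) -> {set 'I_(5 * l+3)} :=
  fun i => [set j : 'I_(5 * l+3) | A7nat l i.+1 j.+1].
Arguments I7 : clear implicits.

(* Main.v *)
Require Import Defs.
From mathcomp Require Import all_boot all_order all_algebra.
From mathcomp Require Import all_classical all_reals.
From mathcomp Require Import Rstruct.
From mathcomp Require Import zify.
Set Implicit Arguments. Unset Strict Implicit. Unset Printing Implicit Defensive.
Import Order.TTheory GRing.Theory Num.Theory.

Ltac fin := rewrite /inL1 /inL2 /inL3 /=; try lia.

Lemma A7_A l p j : p < l.+1 -> A7nat l (2 * p).+1 j =
  [|| inL1 l j && ~~ odd j, inL2 l j && (j != 2 * p + 2 * l + 2) | inL3 l j].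
Proof.
move=> hp; rewrite /A7nat.
have -> : inL1 l (2 * p).+1 && odd (2 * p).+1 by rewrite /inL1; lia.
by have -> : (2 * p).+1 + (2 * l + 1) = 2 * p + 2 * l + 2 by lia.
Qed.

Lemma A7_E1 l i j : odd i -> i < 2 * l + 1 -> A7nat l i.+1 j =
  [|| inL2 l j && odd j, inL1 l j && (j != i.+1) | inL3 l j].
Proof.
move=> ho hi; rewrite /A7nat.
have -> : inL1 l i.+1 && odd i.+1 = false by rewrite /inL1; lia.
by have -> : inL1 l i.+1 && ~~ odd i.+1 by rewrite /inL1; lia.
Qed.

Lemma A7_B l p j : p < l.+1 -> A7nat l (2 * p + 2 * l + 1).+1 j =
  [|| inL2 l j && odd j, inL1 l j && (j != (2 * p).+1) | inL3 l j].
Proof.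
move=> hp; rewrite /A7nat.
have -> : inL1 l (2 * p + 2 * l + 1).+1 && odd (2 * p + 2 * l + 1).+1 = false by rewrite /inL1; lia.
have -> : inL1 l (2 * p + 2 * l + 1).+1 && ~~ odd (2 * p + 2 * l + 1).+1 = false by rewrite /inL1; lia.
have -> : inL2 l (2 * p + 2 * l + 1).+1 && ~~ odd (2 * p + 2 * l + 1).+1 by rewrite /inL2; lia.
by have -> : (2 * p + 2 * l + 1).+1 - (2 * l + 1) = (2 * p).+1 by lia.
Qed.

Lemma A7_O2 l i j : ~~ odd i -> 2 * l + 1 <= i < 4 * l + 2 -> A7nat l i.+1 j =
  [|| inL1 l j && ~~ odd j, inL2 l j && (j != i.+1) | inL3 l j].
Proof.
move=> ho hi; rewrite /A7nat.
have -> : inL1 l i.+1 && odd i.+1 = false by rewrite /inL1; lia.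
have -> : inL1 l i.+1 && ~~ odd i.+1 = false by rewrite /inL1; lia.
have -> : inL2 l i.+1 && ~~ odd i.+1 = false by rewrite /inL2; lia.
by have -> : inL2 l i.+1 && odd i.+1 by rewrite /inL2; lia.
Qed.

Lemma A7_W l p j : p < l.+1 -> A7nat l (4 * l + 2 + p).+1 j =
  (j == (2 * p).+1) || (j == 2 * p + 2 * l + 2).
Proof.
move=> hp; rewrite /A7nat.
have -> : inL1 l (4 * l + 2 + p).+1 = false by rewrite /inL1; lia.
have -> : inL2 l (4 * l + 2 + p).+1 = false by rewrite /inL2; lia.
have -> : inL3 l (4 * l + 2 + p).+1 by rewrite /inL3; lia.
have -> : 2 * ((4 * l + 2 + p).+1 - 4 * l - 2) - 1 = (2 * p).+1 by lia.
by have -> : 2 * ((4 * l + 2 + p).+1 - 3 * l - 2) = 2 * p + 2 * l + 2 by lia.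
Qed.

Lemma W_lt l (p : 'I_l.+1) : 4 * l + 2 + p < 5 * l + 3.
Proof. have := ltn_ord p; lia. Qed.
Lemma Aa_lt l (p : 'I_l.+1) : 2 * p < 5 * l + 3.
Proof. have := ltn_ord p; lia. Qed.
Lemma Bb_lt l (p : 'I_l.+1) : 2 * p + 2 * l + 1 < 5 * l + 3.
Proof. have := ltn_ord p; lia. Qed.
Definition W l (p : 'I_l.+1) : 'I_(5 * l + 3) := Ordinal (W_lt p).
Definition Aa l (p : 'I_l.+1) : 'I_(5 * l + 3) := Ordinal (Aa_lt p).
Definition Bb l (p : 'I_l.+1) : 'I_(5 * l + 3) := Ordinal (Bb_lt p).

Lemma classify l (j : 'I_(5 * l + 3)) :
  (exists p, j = Aa p) \/ (odd j /\ j < 2 * l + 1) \/ (exists p, j = Bb p) \/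
      (~~ odd j /\ 2 * l + 1 <= j < 4 * l + 2) \/ (exists p, j = W p).
Proof.
have hj := ltn_ord j.
case: (ltnP j (2 * l + 1)) => h1.
  case: (boolP (odd j)) => ho; last first.
    have hp : j %/ 2 < l.+1 by lia.
    by left; exists (Ordinal hp); apply: val_inj => /=; lia.
  by right; left.
case: (ltnP j (4 * l + 2)) => h2; last first.
  have hp : j - (4 * l + 2) < l.+1 by lia.
  by do 4 right; exists (Ordinal hp); apply: val_inj => /=; lia.
case: (boolP (odd j)) => ho; last by do 3 right; left; lia.
have hp : (j - (2 * l + 1)) %/ 2 < l.+1 by lia.
by do 2 right; left; exists (Ordinal hp); apply: val_inj => /=; lia.
Qed.

Lemma v1_lt l : 1 < 5 * l + 3. Proof. lia. Qed.
Definition v1 l : 'I_(5 * l + 3) := Ordinal (v1_lt l).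

Definition Rset l (k : 'I_l.+2) : {set 'I_(5 * l + 3)} :=
  if k < l.+1 then [set W (inord k : 'I_l.+1); Aa (inord k : 'I_l.+1); Bb (inord k : 'I_l.+1)]
  else v1 l |: I7 l (v1 l).

Lemma Rset_p l (p : 'I_l.+1) : Rset (widen_ord (leqnSn _) p) = [set W p; Aa p; Bb p].
Proof. by rewrite /Rset /= ltn_ord inord_val. Qed.

Lemma in_Rlast l (j : 'I_(5 * l + 3)) : 1 <= l -> (j \in Rset (@ord_max l.+1)) =
  (nat_of_ord j == 1) || [|| inL2 l j.+1 && odd j.+1, inL1 l j.+1 && (j.+1 != 2) | inL3 l j.+1].
Proof.
move=> hl; rewrite /Rset /= ltnn !inE.
have -> : (j == v1 l) = (nat_of_ord j == 1) by [].
rewrite (@A7_E1 l 1) //; lia.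
Qed.

Definition phiC l (x : {ffun 'I_(5 * l + 3) -> 'rV['F_2]_1}) : 'rV['F_2]_(l.+2) :=
  (\row_k \sum_(j in Rset k) x j ord0 ord0)%R.

Lemma peel l x x' (k : 'I_l.+2) (j0 : 'I_(5 * l + 3)) :
  phiC x = phiC x' -> j0 \in Rset k ->
  (forall j, j \in Rset k -> j != j0 -> x j = x' j) -> x j0 = x' j0.
Proof.
move=> h hj0 hr.
have := congr1 (fun r : 'rV['F_2]_(l.+2) => r ord0 k) h; rewrite !mxE (bigD1 j0) //= [X in _ = X](bigD1 j0) //=.
rewrite (eq_bigr (fun j => x' j ord0 ord0)); last by move=> j /andP[hj hne]; rewrite hr.
move/addIr => e; apply/rowP => i; by rewrite ord1.
Qed.

Lemma has_code_of (F : finFieldType) t r m (A : 'I_m -> {set 'I_m})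
  (phi : {ffun 'I_m -> 'rV[F]_t} -> 'rV[F]_r) :
  (forall i x x', phi x = phi x' -> (forall j, j \in A i -> x j = x' j) -> x i = x' i) ->
  has_code F t r A.
Proof.
move=> H; exists phi.
exists (fun i y z => if [pick x' | (phi x' == y) && (Defs.mask (A i) x' == z)] is Some x' then x' i else 0%R).
move=> x i; case: pickP => [x' /andP[/eqP h1 /eqP h2]|/(_ x)]; last by rewrite !eqxx.
apply: H => // j hj; have := congr1 (fun f : {ffun 'I_m -> 'rV[F]_t} => f j) h2; by rewrite !ffunE hj.
Qed.

Lemma inI7 l (i j : 'I_(5 * l + 3)) : (j \in I7 l i) = A7nat l i.+1 j.+1.
Proof. by rewrite inE. Qed.

Lemma in_Rp l (p : 'I_l.+1) j : j \in [set W p; Aa p; Bb p] -> [\/ j = W p, j = Aa p | j = Bb p].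
Proof.
rewrite !inE; case: eqP => [->|_]; first by move=> _; apply: Or31.
case: eqP => [->|_]; first by move=> _; apply: Or32.
by move/eqP ->; apply: Or33.
Qed.

Lemma decode7 l (hl : 1 <= l) (i : 'I_(5 * l + 3)) x x' :
  phiC x = phiC x' -> (forall j, j \in I7 l i -> x j = x' j) -> x i = x' i.
Proof.
move=> hphi hA.
have rowp : forall p : 'I_l.+1, forall j0, j0 \in [set W p; Aa p; Bb p] ->
   (forall j, j \in [set W p; Aa p; Bb p] -> j != j0 -> x j = x' j) -> x j0 = x' j0.
  by move=> p j0; rewrite -Rset_p; apply: peel.
have rowl : forall j0, j0 \in Rset (@ord_max l.+1) ->
   (forall j, j \in Rset (@ord_max l.+1) -> j != j0 -> x j = x' j) -> x j0 = x' j0.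
  by move=> j0; apply: peel.
have hp := fun p : 'I_l.+1 => ltn_ord p.
case: (classify i) hA => [[p ->]|[[ho hlt]|[[p ->]|[[ho hlt]|[p ->]]]]] hA.
-
  have st1 : forall q, q != p -> x (Aa q) = x' (Aa q).
    move=> q hq; apply: (rowp q); first by rewrite !inE ?eqxx ?orbT.
    move=> j /in_Rp [] -> hne; [|by rewrite eqxx in hne|]; apply: hA; rewrite inI7 /= A7_A //.
    + rewrite /inL3; have := hp q; lia.
    + have : nat_of_ord q != nat_of_ord p by []. rewrite /inL2; have := hp q; lia.
  apply: rowl; first by rewrite in_Rlast //= /inL1; have := hp p; lia.
  move=> j hj hne.
  case: (classify j) hj hne => [[q ->]|[[ho hlt]|[[q ->]|[[ho hlt]|[q ->]]]]] hj hne.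
  + by apply: st1; apply: contra hne => /eqP ->.
  + apply: hA; rewrite inI7 /= A7_A //; rewrite /inL1; lia.
  + by exfalso; move: hj; rewrite in_Rlast //= /inL1 /inL2 /inL3; have := hp q; lia.
  + apply: hA; rewrite inI7 /= A7_A //; rewrite /inL2; have := ltn_ord j; lia.
  + apply: hA; rewrite inI7 /= A7_A //; rewrite /inL3; have := hp q; lia.
- (* even L1 paper *)
  apply: rowl; first by rewrite in_Rlast // /inL1; lia.
  move=> j hj hne; apply: hA; move: hj.
  have : nat_of_ord j != nat_of_ord i by [].
  rewrite inI7 A7_E1 // in_Rlast // /inL1 /inL2 /inL3; have := ltn_ord j; lia.
-
  have ha : x (Aa p) = x' (Aa p).
    apply: rowl; first by rewrite in_Rlast //= /inL1; have := hp p; lia.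
    move=> j hj hne; apply: hA; move: hj.
    have : nat_of_ord j != nat_of_ord (Aa p) by [].
    rewrite inI7 /= A7_B // in_Rlast // /inL1 /inL2 /inL3 /=; have := ltn_ord j; have := hp p; lia.
  apply: (rowp p); first by rewrite !inE ?eqxx ?orbT.
  move=> j /in_Rp [] -> hne; [|by []|by rewrite eqxx in hne].
  apply: hA; rewrite inI7 /= A7_B // /inL3; have := hp p; lia.
- (* odd L2 paper *)
  have st1 : forall q, x (Aa q) = x' (Aa q).
    move=> q; apply: (rowp q); first by rewrite !inE ?eqxx ?orbT.
    move=> j /in_Rp [] -> hne; [|by rewrite eqxx in hne|]; apply: hA; rewrite inI7 /= A7_O2 //.
    + rewrite /inL3; have := hp q; lia.
    + rewrite /inL2; have := hp q; lia.
  apply: rowl; first by rewrite in_Rlast // /inL2; have := ltn_ord i; lia.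
  move=> j hj hne.
  case: (classify j) hj hne => [[q ->]|[[ho' hlt']|[[q ->]|[[ho' hlt']|[q ->]]]]] hj hne.
  + by apply: st1.
  + apply: hA; rewrite inI7 /= A7_O2 //; rewrite /inL1; lia.
  + by exfalso; move: hj; rewrite in_Rlast //= /inL1 /inL2 /inL3; have := hp q; lia.
  + apply: hA; have : nat_of_ord j != nat_of_ord i by [].
    rewrite inI7 /= A7_O2 //; rewrite /inL2; have := ltn_ord j; lia.
  + apply: hA; rewrite inI7 /= A7_O2 //; rewrite /inL3; have := hp q; lia.
-
  apply: (rowp p); first by rewrite !inE ?eqxx ?orbT.
  move=> j /in_Rp [] -> hne; first (by rewrite eqxx in hne); apply: hA; rewrite inI7 /= A7_W //.
  + by rewrite ?eqxx ?orbT.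
  + apply/orP; right; apply/eqP; lia.
Qed.

Lemma oE n (a b : 'I_n) : (a == b) = (nat_of_ord a == nat_of_ord b).
Proof. by []. Qed.

Lemma matchableP m (rows : seq {set 'I_m}) L n :
  matchable rows L n <-> exists (f : 'I_n -> 'I_(size rows)) (g : 'I_n -> 'I_m),
    [/\ injective f, injective g & forall a, g a \in L /\ g a \in nth finset.set0 rows (f a)].
Proof.
split.
  case/existsP => f /existsP [g /and3P [/injectiveP hf /injectiveP hg /forallP h]].
  by exists f, g; split => // a; case/andP: (h a).
case=> f [g [hf hg h]]; apply/existsP; exists (finfun f); apply/existsP; exists (finfun g).
apply/and3P; split.
- by apply/injectiveP => a b; rewrite !ffunE; apply: hf.
- by apply/injectiveP => a b; rewrite !ffunE; apply: hg.
- by apply/forallP => a; rewrite !ffunE; case: (h a) => -> ->.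
Qed.

Lemma match_card m (rows : seq {set 'I_m}) L n : matchable rows L n -> n <= #|L|.
Proof.
case/matchableP => f [g [hf hg h]].
have <- : #|[set g a | a : 'I_n]| = n by rewrite card_imset // card_ord.
apply: subset_leq_card; apply/fintype.subsetP => x /imsetP [a _ ->]; by case: (h a).
Qed.

Lemma match_rows m (rows : seq {set 'I_m}) L n : matchable rows L n -> n <= size rows.
Proof.
case/matchableP => f [g [hf hg h]].
by have := @leq_card _ _ f hf; rewrite !card_ord.
Qed.

Lemma mcm_le m (rows : seq {set 'I_m}) L b :
  (forall n, matchable rows L n -> n <= b) -> mcm rows L <= b.
Proof. by move=> h; apply/bigmax_leqP => i; apply: h. Qed.

Lemma mcm_ge m (rows : seq {set 'I_m}) L n : matchable rows L n -> n <= mcm rows L.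
Proof.
move=> hm; have h2 : #|L| <= m by rewrite -[m in _ <= m]card_ord max_card.
have hn : n < m.+1 by have := match_card hm; lia.
exact: (@leq_bigmax_cond _ (fun n : 'I_m.+1 => matchable rows L n) (fun n => nat_of_ord n) (Ordinal hn)).
Qed.

Lemma match_drop m (rows : seq {set 'I_m}) L i n :
  matchable rows (i |: L) n.+1 -> matchable rows L n.
Proof.
case/matchableP => f [g [hf hg h]].
suff [a0 ha0] : exists a0, forall b, g (lift a0 b) != i.
  apply/matchableP; exists (fun b => f (lift a0 b)), (fun b => g (lift a0 b)); split.
  - by move=> b c /hf /lift_inj.
  - by move=> b c /hg /lift_inj.
  move=> b; case: (h (lift a0 b)) => h1 h2; split => //.
  by move: h1; rewrite !inE => /orP [/eqP e|//]; move: (ha0 b); rewrite e eqxx.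
case: (pickP (fun a => g a == i)) => [a0 /eqP e|hn].
  exists a0 => b; apply/eqP => e2; move: e2; rewrite -e => /hg e3.
  by have := neq_lift a0 b; rewrite e3 eqxx.
by exists ord0 => b; rewrite hn.
Qed.

Lemma mcm_U1 m (rows : seq {set 'I_m}) L i : mcm rows (i |: L) <= (mcm rows L).+1.
Proof.
apply: mcm_le => -[|n] // /match_drop hm.
by have := mcm_ge hm.
Qed.

Lemma match_full m (rows : seq {set 'I_m}) (L : {set 'I_m}) (h : 'I_(size rows) -> 'I_m) :
  injective h -> (forall k, h k \in L /\ h k \in nth finset.set0 rows k) ->
  matchable rows L (size rows).
Proof. by move=> hi hk; apply/matchableP; exists id, h; split. Qed.

Definition rowW l (q : 'I_l.+1) := W q |: I7 l (W q).

Lemma rowW_mem l (q : 'I_l.+1) (j : 'I_(5 * l + 3)) : (j \in rowW q) =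
  [|| nat_of_ord j == 4 * l + 2 + q, nat_of_ord j == 2 * q | nat_of_ord j == 2 * q + 2 * l + 1].
Proof. rewrite !inE oE ?inI7 /= A7_W ?ltn_ord //; apply/idP/idP; lia. Qed.

Lemma inB l (i j : 'I_(5 * l + 3)) :
  (j \in Bset (I7 l) i) = (nat_of_ord j != i) && ~~ A7nat l i.+1 j.+1.
Proof. by rewrite /Bset !inE oE ?inI7 negb_or. Qed.

Lemma in_roww l (w j : 'I_(5 * l + 3)) :
  (j \in w |: I7 l w) = (nat_of_ord j == w) || A7nat l w.+1 j.+1.
Proof. by rewrite !inE oE ?inI7. Qed.

Lemma nth_rows l (s : seq 'I_l.+1) k : k < size s ->
  nth finset.set0 (map (@rowW l) s) k = rowW (nth ord0 s k).
Proof. by move=> hk; rewrite (nth_map ord0). Qed.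

Lemma swap_lemma l (s : seq 'I_l.+1) (i : 'I_(5 * l + 3)) (L : {set 'I_(5 * l + 3)}) n :
  uniq s ->
  (forall q, q \in s -> i \in rowW q -> exists c, [/\ c \in L, c \in rowW q &
      forall q', q' != q -> c \notin rowW q']) ->
  matchable (map (@rowW l) s) (i |: L) n -> matchable (map (@rowW l) s) L n.
Proof.
move=> us hP /matchableP [f [g [hf hg h]]].
have hfs : forall a, f a < size s by move=> a; rewrite -(size_map (@rowW l)); exact: ltn_ord.
pose qa a := nth ord0 s (f a).
have hrow : forall a, g a \in rowW (qa a).
  by move=> a; case: (h a) => _; rewrite nth_rows.
have qane : forall a b, a != b -> qa a != qa b.
  move=> a b hab; rewrite /qa nth_uniq //; apply: contra hab => /eqP e.
  by apply/eqP; apply: hf; apply: val_inj.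
case: (pickP (fun a => g a == i)) => [a0 /eqP ha0|hn]; last first.
  apply/matchableP; exists f, g; split => // a; case: (h a) => h1 h2; split => //.
  by move: h1; rewrite !inE; have := hn a; move=> /= ->.
have hi : i \in rowW (qa a0) by rewrite -ha0 hrow.
have [c [cL cr cn]] := hP (qa a0) (mem_nth ord0 (hfs a0)) hi.
apply/matchableP; exists f, (fun a => if a == a0 then c else g a); split => //.
- move=> a b; case: eqP => [->|/eqP na]; case: eqP => [->|/eqP nb] //.
  + by move=> e; have := cn _ (qane _ _ nb); rewrite e hrow.
  + by move=> e; have := cn _ (qane _ _ na); rewrite -e hrow.
  + by apply: hg.
move=> a; case: eqP => [->|/eqP na]; first by split => //; rewrite nth_rows.
case: (h a) => h1 h2; split => //.
move: h1; rewrite !inE => /orP [/eqP e|//]; exfalso.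
by move: na; rewrite -ha0 in e; rewrite (hg _ _ e) eqxx.
Qed.

Lemma full_lemma l (s : seq 'I_l.+1) (w : 'I_(5 * l + 3)) (L : {set 'I_(5 * l + 3)})
  (col : 'I_l.+1 -> 'I_(5 * l + 3)) (c : 'I_(5 * l + 3)) :
  uniq s -> injective col -> (forall q, c != col q) ->
  (forall q, col q \in L /\ col q \in rowW q) -> c \in L -> c \in w |: I7 l w ->
  (size s).+1 <= mcm (rcons (map (@rowW l) s) (w |: I7 l w)) L.
Proof.
move=> us ci cn cq cL cw.
set rows := rcons _ _.
have e : size rows = (size s).+1 by rewrite size_rcons size_map.
rewrite -e.
apply: mcm_ge.
apply: (match_full (h := fun k => if k < size s then col (nth ord0 s k) else c)).
- move=> k1 k2 /=.
  have h1 : k1 < (size s).+1 by rewrite -e.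
  have h2 : k2 < (size s).+1 by rewrite -e.
  case: ltnP => l1; case: ltnP => l2.
  + move/ci/eqP; rewrite nth_uniq // => /eqP e2; exact: val_inj.
  + by move=> e2; have := cn (nth ord0 s k1); rewrite e2 eqxx.
  + by move=> e2; have := cn (nth ord0 s k2); rewrite e2 eqxx.
  + move=> _; apply: val_inj => /=; lia.
- move=> k; rewrite /rows nth_rcons size_map.
  have hk : k < (size s).+1 by rewrite -e.
  case: ltnP => l1.
  + by rewrite nth_rows //; apply: cq.
  + have e3 : nat_of_ord k = size s by apply/eqP; rewrite eqn_leq l1 -ltnS hk.
    by rewrite e3 eqxx; split.
Qed.

Lemma mcm_img l m (rows : seq {set 'I_m}) (B : {set 'I_m}) (ga : 'I_l.+1 -> 'I_m) :
  B \subset [set ga q | q : 'I_l.+1] -> mcm rows B <= l.+1.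
Proof.
move=> hs; apply: mcm_le => n /match_card h.
apply: (leq_trans h); apply: (leq_trans (subset_leq_card hs)).
apply: (leq_trans (leq_imset_card _ _)); by rewrite card_ord.
Qed.


Lemma cardA_W l (q : 'I_l.+1) : #|I7 l (W q)| <= 2.
Proof.
have hs : I7 l (W q) \subset [set Aa q; Bb q].
  apply/fintype.subsetP => j; rewrite inI7 /= A7_W ?ltn_ord // !inE !oE /=; lia.
by apply: (leq_trans (subset_leq_card hs)); rewrite cards2; case: (_ != _).
Qed.

Lemma W_in l (hl : 1 <= l) (w : 'I_(5 * l + 3)) (p : 'I_l.+1) : (forall p, w != W p) -> W p \in I7 l w.
Proof.
move=> hw; have hp := ltn_ord p; rewrite inI7 /=.
case: (classify w) hw => [[q ->]|[[ho hlt]|[[q ->]|[[ho hlt]|[q ->]]]]] hw.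
- by rewrite A7_A ?ltn_ord //; fin.
- by rewrite A7_E1 //; fin.
- by rewrite A7_B ?ltn_ord //; fin.
- by rewrite A7_O2 //; fin.
- by have := hw q; rewrite eqxx.
Qed.

Lemma e_lt l : 2 * l + 2 < 5 * l + 3. Proof. lia. Qed.
Definition e2 l : 'I_(5 * l + 3) := Ordinal (e_lt l).

Lemma cardA_big l (hl : 1 <= l) (w : 'I_(5 * l + 3)) : (forall p, w != W p) -> 2 < #|I7 l w|.
Proof.
move=> hw.
have [e [he1 he2]] : exists e : 'I_(5 * l + 3), e < 4 * l + 2 /\ e \in I7 l w.
  rewrite /=; case: (classify w) hw => [[q ->]|[[ho hlt]|[[q ->]|[[ho hlt]|[q ->]]]]] hw.
  - exists (v1 l); split; first by rewrite /=; lia.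
    by rewrite inI7 /= A7_A ?ltn_ord //; fin.
  - exists (Aa ord0); split; first by rewrite /=; lia.
    by rewrite inI7 /= A7_E1 //; fin.
  - exists (e2 l); split; first by rewrite /=; lia.
    by rewrite inI7 /= A7_B ?ltn_ord //; fin.
  - exists (v1 l); split; first by rewrite /=; lia.
    by rewrite inI7 /= A7_O2 //; fin.
  - by have := hw q; rewrite eqxx.
have Winj : injective (@W l) by move=> p q /(congr1 val) /= h; apply: val_inj => /=; lia.
have hsub : e |: [set W p | p : 'I_l.+1] \subset I7 l w.
  apply/fintype.subsetP => j; rewrite !inE => /orP [/eqP -> |/imsetP [p _ ->]]; [by rewrite -inI7 | by rewrite -inI7; exact: (W_in hl p hw)].

have hc : #|e |: [set W p | p : 'I_l.+1]| = l.+2.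
  rewrite cardsU1 card_imset // card_ord.
  have -> : e \notin [set W p | p : 'I_l.+1].
    by apply/imsetP => -[p _ /(congr1 val) /=]; lia.
  by [].
apply: leq_trans (subset_leq_card hsub); rewrite hc; lia.
Qed.

Lemma cover_row l (hl : 1 <= l) (w : 'I_(5 * l + 3)) (p : 'I_l.+1) : (forall p, w != W p) ->
  (Aa p \in w |: I7 l w) || (Bb p \in w |: I7 l w).
Proof.
move=> hw; have hp := ltn_ord p; rewrite !in_roww /=.
case: (classify w) hw => [[q ->]|[[ho hlt]|[[q ->]|[[ho hlt]|[q ->]]]]] hw.
- by rewrite !A7_A ?ltn_ord //; have := ltn_ord q; fin.
- by rewrite !A7_E1 //; fin.
- by rewrite !A7_B ?ltn_ord //; have := ltn_ord q; fin.
- by rewrite !A7_O2 //; fin.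
- by have := hw q; rewrite eqxx.
Qed.


Lemma noinc l (hl : 1 <= l) (s : seq 'I_l.+1) (i : 'I_(5 * l + 3)) : uniq s ->
  (forall q, q \in s -> i != W q) ->
  mcm (map (@rowW l) s) (i |: Bset (I7 l) i) <= mcm (map (@rowW l) s) (Bset (I7 l) i).
Proof.
move=> us hi; apply: mcm_le => n hm; apply: mcm_ge; apply: (swap_lemma us _ hm).
move=> q hq; have hq' := ltn_ord q; have := hi q hq; rewrite oE /= rowW_mem => hne hir.
have [ei|ei] : nat_of_ord i = 2 * q \/ nat_of_ord i = 2 * q + 2 * l + 1 by lia.
- exists (Bb q); split.
  + by rewrite inB /= ei A7_A //; fin.
  + by rewrite rowW_mem /=; lia.
  + move=> q' hq'q; rewrite rowW_mem /=; have := ltn_ord q'.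
    have : nat_of_ord q' != q by []. lia.
- exists (Aa q); split.
  + by rewrite inB /= ei A7_B //; fin.
  + by rewrite rowW_mem /=; lia.
  + move=> q' hq'q; rewrite rowW_mem /=; have := ltn_ord q'.
    have : nat_of_ord q' != q by []. lia.
Qed.

Lemma next1 l (hl : 1 <= l) (s : seq 'I_l.+1) p : uniq (rcons s p) ->
  umcd_next (I7 l) (~: [set W q | q in s]) (map (@rowW l) s) (W p) =
  ~: [set W q | q in rcons s p].
Proof.
move=> us; rewrite /umcd_next.
have -> : rcons (map (@rowW l) s) (W p |: I7 l (W p)) = map (@rowW l) (rcons s p) by rewrite map_rcons.
apply/setP => i; rewrite !inE.
case: (boolP (i \in [set W q | q in rcons s p])) => hi /=.
  case/imsetP: hi => q; rewrite mem_rcons inE => /orP [/eqP -> -> | hq ->]; first by rewrite eqxx.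
  by rewrite (imset_f _ hq) andbF.
have h1 : i != W p by apply: contra hi => /eqP ->; apply: imset_f; rewrite mem_rcons mem_head.
have h2 : i \notin [set W q | q in s].
  by apply: contra hi => /imsetP [q hq ->]; apply: imset_f; rewrite mem_rcons inE hq orbT.
rewrite h1 h2 /=.
have := noinc hl (i := i) us.
have h3 : forall q, q \in rcons s p -> i != W q.
  by move=> q hq; apply: contra hi => /eqP ->; apply: imset_f.
move/(_ h3) => h; apply: contraTneq h => ->; rewrite -ltnNge; lia.
Qed.


Lemma ordne n (a b : 'I_n) : a <> b -> nat_of_ord a != nat_of_ord b.
Proof. by move=> h; apply/eqP => e; apply: h; apply: val_inj. Qed.

Definition colA l (p0 q : 'I_l.+1) : 'I_(5 * l + 3) := if q == p0 then Bb p0 else Aa q.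
Definition colB l (p0 q : 'I_l.+1) : 'I_(5 * l + 3) := if q == p0 then Aa p0 else Bb q.

Lemma colA_inj l (p0 : 'I_l.+1) : injective (colA p0).
Proof.
move=> a b; rewrite /colA; case: (a =P p0) => [->|na]; case: (b =P p0) => [->|nb] //.
all: move/(congr1 val) => /= e.
- exfalso; lia.
- exfalso; lia.
- apply/eqP; rewrite oE; lia.
Qed.

Lemma colB_inj l (p0 : 'I_l.+1) : injective (colB p0).
Proof.
move=> a b; rewrite /colB; case: (a =P p0) => [->|na]; case: (b =P p0) => [->|nb] //;
  move/(congr1 val) => /= e; first [by apply/eqP; rewrite oE; lia | exfalso; lia].
Qed.

Lemma Aa_inj l : injective (@Aa l).
Proof. by move=> a b /(congr1 val) /= e; apply/eqP; rewrite oE; lia. Qed.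
Lemma Bb_inj l : injective (@Bb l).
Proof. by move=> a b /(congr1 val) /= e; apply/eqP; rewrite oE; lia. Qed.

Lemma in_row_w l (hl : 1 <= l) (w i : 'I_(5 * l + 3)) : (forall p, w != W p) -> w != i ->
  (odd i && (i < 2 * l + 1)) || (~~ odd i && (2 * l + 1 <= i < 4 * l + 2)) ->
  i \in w |: I7 l w.
Proof.
move=> hw; rewrite oE => hwi hi; rewrite in_roww.
case: (classify w) hw hwi => [[q ->]|[[ho hlt]|[[q ->]|[[ho hlt]|[q ->]]]]] hw /= hwi.
- by rewrite A7_A ?ltn_ord //; have := ltn_ord q; fin.
- by rewrite A7_E1 //; fin.
- by rewrite A7_B ?ltn_ord //; have := ltn_ord q; fin.
- by rewrite A7_O2 //; fin.
- by have := hw q; rewrite eqxx.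
Qed.

Lemma inc2 l (hl : 1 <= l) (s : seq 'I_l.+1) (w i : 'I_(5 * l + 3)) :
  uniq s -> size s = l.+1 -> (forall p, w != W p) -> (forall p, i != W p) -> i != w ->
  mcm (rcons (map (@rowW l) s) (w |: I7 l w)) (i |: Bset (I7 l) i) =
  (mcm (rcons (map (@rowW l) s) (w |: I7 l w)) (Bset (I7 l) i)).+1.
Proof.
move=> us hs hw hi hiw.
set rows := rcons _ _.
suff [[col [c [hcol hcn hcq hcL hcw]]] [ga hB]] :
  (exists col c, [/\ injective col, (forall q, c != col q),
     (forall q, col q \in i |: Bset (I7 l) i /\ col q \in rowW q),
     c \in i |: Bset (I7 l) i & c \in w |: I7 l w]) /\
  (exists ga : 'I_l.+1 -> 'I_(5 * l + 3), Bset (I7 l) i \subset [set ga q | q : 'I_l.+1]).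
  have lb : (size s).+1 <= mcm rows (i |: Bset (I7 l) i) := full_lemma us hcol hcn hcq hcL hcw.
  rewrite hs in lb.
  have ub := mcm_img rows hB.
  have u := mcm_U1 rows (Bset (I7 l) i) i.
  apply/eqP; rewrite eqn_leq u /=; lia.
have hwi : w != i by rewrite eq_sym.
case: (classify i) hi hiw hwi => [[p0 ->]|[[ho hlt]|[[p0 ->]|[[ho hlt]|[p ->]]]]] hi hiw hwi;
  last by have := hi p; rewrite eqxx.
-
  have hp0 := ltn_ord p0.
  split; last first.
    exists (colA p0); apply/fintype.subsetP => j; rewrite inB /= A7_A //.
    case: (classify j) => [[q ->]|[[hoj hltj]|[[q ->]|[[hoj hltj]|[q ->]]]]] /=.
    + move=> hj; apply/imsetP; exists q => //; rewrite /colA.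
      case: eqP => // e; exfalso; move: hj; rewrite e; fin.
    + move=> hj; exfalso; move: hj; fin.
    + move=> hj; apply/imsetP; exists p0 => //; rewrite /colA eqxx.
      have hq := ltn_ord q.
      case: (q =P p0) => [-> //|/ordne nq]; exfalso; move: hj; fin.
    + move=> hj; exfalso; move: hj; have := ltn_ord j; fin.
    + move=> hj; exfalso; move: hj; have := ltn_ord q; fin.
  case: (boolP (Aa p0 \in w |: I7 l w)) => hin.
  + exists (colA p0), (Aa p0); split.
    * exact: colA_inj.
    * move=> q; rewrite /colA; case: (q =P p0) => [_|/ordne nq]; rewrite oE /=; lia.
    * move=> q; rewrite /colA; case: (q =P p0) => [->|/ordne nq] /=; have hq := ltn_ord q; split.
      -- by rewrite in_setU1 oE inB /= A7_A //; fin.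
      -- by rewrite rowW_mem /=; lia.
      -- by rewrite in_setU1 oE inB /= A7_A //; fin.
      -- by rewrite rowW_mem /=; lia.
    * exact: setU11.
    * exact: hin.
  + have hin2 : Bb p0 \in w |: I7 l w by have := cover_row hl p0 hw; rewrite (negbTE hin).
    exists (@Aa l), (Bb p0); split.
    * exact: Aa_inj.
    * by move=> q; rewrite oE /=; lia.
    * move=> q; have hq := ltn_ord q; split.
      -- by rewrite in_setU1 oE inB /= A7_A //; fin.
      -- by rewrite rowW_mem /=; lia.
    * by rewrite in_setU1 oE inB /= A7_A //; fin.
    * exact: hin2.
- (* i paper even in L1 *)
  split; last first.
    exists (@Bb l); apply/fintype.subsetP => j; rewrite inB /= A7_E1 //.
    case: (classify j) => [[q ->]|[[hoj hltj]|[[q ->]|[[hoj hltj]|[q ->]]]]] /=.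
    + move=> hj; exfalso; move: hj; have := ltn_ord q; fin.
    + move=> hj; exfalso; move: hj; fin.
    + by move=> hj; apply/imsetP; exists q.
    + move=> hj; exfalso; move: hj; have := ltn_ord j; fin.
    + move=> hj; exfalso; move: hj; have := ltn_ord q; fin.
  exists (@Bb l), i; split.
  * exact: Bb_inj.
  * by move=> q; rewrite oE /=; lia.
  * move=> q; have hq := ltn_ord q; split.
    -- by rewrite in_setU1 oE inB /= A7_E1 //; fin.
    -- by rewrite rowW_mem /=; lia.
  * exact: setU11.
  * by apply: in_row_w => //; rewrite ho hlt.
-
  have hp0 := ltn_ord p0.
  split; last first.
    exists (colB p0); apply/fintype.subsetP => j; rewrite inB /= A7_B //.
    case: (classify j) => [[q ->]|[[hoj hltj]|[[q ->]|[[hoj hltj]|[q ->]]]]] /=.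
    + move=> hj; apply/imsetP; exists p0 => //; rewrite /colB eqxx.
      have hq := ltn_ord q.
      case: (q =P p0) => [-> //|/ordne nq]; exfalso; move: hj; fin.
    + move=> hj; exfalso; move: hj; fin.
    + move=> hj; apply/imsetP; exists q => //; rewrite /colB.
      case: eqP => // e; exfalso; move: hj; rewrite e; fin.
    + move=> hj; exfalso; move: hj; have := ltn_ord j; fin.
    + move=> hj; exfalso; move: hj; have := ltn_ord q; fin.
  case: (boolP (Bb p0 \in w |: I7 l w)) => hin.
  + exists (colB p0), (Bb p0); split.
    * exact: colB_inj.
    * move=> q; rewrite /colB; case: (q =P p0) => [_|/ordne nq]; rewrite oE /=; lia.
    * move=> q; rewrite /colB; case: (q =P p0) => [->|/ordne nq] /=; have hq := ltn_ord q; split.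
      -- by rewrite in_setU1 oE inB /= A7_B //; fin.
      -- by rewrite rowW_mem /=; lia.
      -- by rewrite in_setU1 oE inB /= A7_B //; fin.
      -- by rewrite rowW_mem /=; lia.
    * exact: setU11.
    * exact: hin.
  + have hin2 : Aa p0 \in w |: I7 l w by have := cover_row hl p0 hw; rewrite (negbTE hin) orbF.
    exists (@Bb l), (Aa p0); split.
    * exact: Bb_inj.
    * by move=> q; rewrite oE /=; lia.
    * move=> q; have hq := ltn_ord q; split.
      -- by rewrite in_setU1 oE inB /= A7_B //; fin.
      -- by rewrite rowW_mem /=; lia.
    * by rewrite in_setU1 oE inB /= A7_B //; fin.
    * exact: hin2.
- (* i paper odd in L2 *)
  have hi3 := ltn_ord i.
  split; last first.
    exists (@Aa l); apply/fintype.subsetP => j; rewrite inB /= A7_O2 //.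
    case: (classify j) => [[q ->]|[[hoj hltj]|[[q ->]|[[hoj hltj]|[q ->]]]]] /=.
    + by move=> hj; apply/imsetP; exists q.
    + move=> hj; exfalso; move: hj; fin.
    + move=> hj; exfalso; move: hj; have := ltn_ord q; fin.
    + move=> hj; exfalso; move: hj; have := ltn_ord j; fin.
    + move=> hj; exfalso; move: hj; have := ltn_ord q; fin.
  exists (@Aa l), i; split.
  * exact: Aa_inj.
  * by move=> q; have := ltn_ord q; rewrite oE /=; lia.
  * move=> q; have hq := ltn_ord q; split.
    -- by rewrite in_setU1 oE inB /= A7_O2 //; fin.
    -- by rewrite rowW_mem /=; lia.
  * exact: setU11.
  * by apply: in_row_w => //; rewrite ho hlt orbT.
Qed.

Lemma next2 l (hl : 1 <= l) (s : seq 'I_l.+1) (w : 'I_(5 * l + 3)) :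
  uniq s -> size s = l.+1 -> (forall q, q \in s) -> (forall p, w != W p) ->
  umcd_next (I7 l) (~: [set W q | q in s]) (map (@rowW l) s) w = finset.set0.
Proof.
move=> us hs hall hw; rewrite /umcd_next; apply/setP => i; rewrite !inE.
case: (boolP (i \in [set W q | q in s])) => hi; first by rewrite andbF.
have hiW : forall p, i != W p by move=> p; apply: contra hi => /eqP ->; apply: imset_f.
case: (boolP (i == w)) => //= hiw.
by rewrite (inc2 hl us hs hw hiW hiw) eqxx.
Qed.

Lemma phase l (hl : 1 <= l) ws (s : seq 'I_l.+1) : uniq s ->
  umcd_run (I7 l) (~: [set W q | q in s]) (map (@rowW l) s) ws -> size s + size ws = l.+2.
Proof.
elim: ws s => [|w ws IH] s us /=.
  move/eqP => h.
  have : Aa ord0 \in ~: [set W q | q in s].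
    by rewrite inE; apply/imsetP => -[q _ /(congr1 val) /=]; lia.
  by rewrite h inE.
case/and3P => hw /forall_inP hmin hrun.
case: (boolP [forall q, q \in s]) => hall.
  have hall' : forall q, q \in s by move=> q; exact: (forallP hall q).
  have hwW : forall p, w != W p.
    by move=> p; apply: contraTneq hw => ->; rewrite inE negbK; apply: imset_f.
  have hs : size s = l.+1.
    have e : #|s| = #|'I_l.+1| by apply: eq_card => q; rewrite hall' inE.
    by rewrite -(card_uniqP us) e card_ord.
  rewrite next2 // in hrun.
  case: ws hrun {IH} => [_|w' ws'] /=; first by rewrite hs addn1.
  by rewrite inE.
case/forallPn: hall => q0 hq0.
have hW0 : W q0 \in ~: [set W q | q in s].
  rewrite inE; apply: contra hq0 => /imsetP [q hq /(congr1 val) /= e].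
  by have -> : q0 = q by apply/eqP; rewrite oE; lia.
have hc := hmin _ hW0.
have [p ep] : exists p, w = W p.
  case: (boolP [exists p, w == W p]) => [/existsP [p /eqP ->]|/existsPn hn]; first by exists p.
  by have := leq_trans (cardA_big hl hn) (leq_trans hc (cardA_W q0)).
subst w.
have hp : p \notin s by move: hw; rewrite inE; apply: contra => hp; apply: imset_f.
have us' : uniq (rcons s p) by rewrite rcons_uniq hp us.
rewrite next1 // in hrun.
change (is_true (umcd_run (I7 l) (~: [set W q | q in rcons s p]) (rcons (map (@rowW l) s) (rowW p)) ws)) in hrun.
rewrite -map_rcons in hrun.
by have := IH _ us' hrun; rewrite size_rcons addSnnS.
Qed.

Lemma umcd_k l (hl : 1 <= l) k : umcd_output (I7 l) k -> k = l.+2.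
Proof.
case=> ws [hrun <-].
have e : [set: 'I_(5 * l + 3)] = ~: [set W q | q in ([::] : seq 'I_l.+1)].
  apply/setP => j; rewrite !inE; apply/esym/imsetP => -[q].
  by rewrite in_nil.
rewrite e in hrun.
by have := phase hl (s := [::]) isT hrun.
Qed.

Lemma code_ub l (hl : 1 <= l) : has_code 'F_2 1 l.+2 (I7 l).
Proof. apply: (has_code_of (phi := @phiC l)) => i x x'; exact: decode7. Qed.

Lemma code_lb l (hl : 1 <= l) (F : finFieldType) t r :
  has_code F t r (I7 l) -> t * l.+2 <= r.
Proof.
case=> phi [psi hdec].
have Winj : injective (@W l).
  by move=> p q /(congr1 val) /= h; apply: val_inj => /=; lia.
pose S := v1 l |: [set W p | p : 'I_l.+1].
have cardS : #|S| = l.+2.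
  rewrite cardsU1 card_imset // ?cardsT card_ord.
  have -> : v1 l \notin [set W p | p : 'I_l.+1].
    by apply/imsetP => -[p _ /(congr1 val) /=]; lia.
  by [].
pose X := pffun_on (0 : 'rV[F]_t)%R S predT.
have z : forall f, f \in X -> forall j, j \notin S -> f j = 0%R.
  move=> f /pffun_onP [hs _] j hj; apply/eqP; apply: contraNT hj => hne.
  by move/fintype.subsetP: hs; apply; rewrite inE.
have inj : {in X &, injective phi}.
  move=> x y hx hy he.
  have hW : forall p, x (W p) = y (W p).
    move=> p; rewrite -(hdec x (W p)) -(hdec y (W p)) he; congr psi.
    apply/ffunP => j; rewrite !ffunE; case: ifP => // hj; rewrite !z //;
    move: hj; rewrite inE /= A7_W ?ltn_ord // => hj;
    rewrite !inE negb_or; apply/andP; split; first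
      [ by apply/eqP => /(congr1 val) /=; have := ltn_ord p; lia
      | by apply/imsetP => -[q _ /(congr1 val) /= e]; move: hj; rewrite e; have := ltn_ord p; have := ltn_ord q; lia].
  have hv : x (v1 l) = y (v1 l).
    rewrite -(hdec x (v1 l)) -(hdec y (v1 l)) he; congr psi.
    apply/ffunP => j; rewrite !ffunE; case: ifP => // hj.
    case: (boolP (j \in [set W p | p : 'I_l.+1])) => [/imsetP [q _ ->] //|hn].
    have hnS : j \notin S.
      rewrite !inE negb_or hn andbT; apply/eqP => e; move: hj; rewrite e inE (@A7_E1 l 1) //= /inL1 /inL2 /inL3; lia.
    by rewrite !z.
  apply/ffunP => j; case: (boolP (j \in S)) => hj; last by rewrite !z.
  by move: hj; rewrite !inE => /orP [/eqP -> | /imsetP [q _ ->]].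
have := @leq_card_in _ _ phi X inj; rewrite card_pffun_on cardS.
have -> : #|@predT 'rV[F]_t| = #|{: 'rV[F]_t}| by [].
rewrite !card_mx -expnM leq_exp2l ?mul1n 1?mulnC //.
by apply/card_gt1P; exists 0%R, 1%R; rewrite !inE eq_sym oner_neq0.
Qed.

Lemma beta_val l (hl : 1 <= l) : beta (I7 l) = (l.+2)%:R%R.
Proof.
rewrite /beta.
set E := (X in inf X).
have memE : E (l.+2)%:R%R.
  exists 'F_2, 1, l.+2; split => //; split; first exact: code_ub.
  by rewrite divr1.
have lbE : lbound E (l.+2)%:R%R.
  move=> x [F [t [r [ht [hc ->]]]]].
  rewrite ler_pdivlMr ?ltr0n // -natrM ler_nat mulnC; exact: code_lb hc.
apply/eqP; rewrite eq_le; apply/andP; split.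
  by apply: (ge_inf _ memE); exists (l.+2)%:R%R.
by apply: lb_le_inf => //; exists (l.+2)%:R%R.
Qed.

Unset Implicit Arguments.

Theorem proposition11 (l : nat) (hl : (1 <= l)%N) (k : nat) :
  umcd_output (I7 l) k -> beta (I7 l) = (k%:R)%R.
Proof.
move=> h; rewrite (umcd_k hl h); exact: beta_val.
Qed.
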